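(* Let $\mathcal{X},\mathcal{Y},\mathcal{A},\mathcal{B}$ be finite sets and $\epsilon_A,\epsilon_B\in[0,1]$. Let $\{p^{\lambda_A}_{A}\}_{\lambda_A}$ be the (finite) set of vertices of the polytope $\mathcal{P}_2^{A,\epsilon_A}$ and $\{p^{\lambda_B}_{B}\}_{\lambda_B}$ the set of vertices of the polytope $\mathcal{P}_2^{B,\epsilon_B}$. Then $\mathcal{P}_2^{AB,(\epsilon_A,\epsilon_B)}$ is a polytope, equal to the convex hull of the finite set $$V=\{p^{(\lambda_A,\lambda_B)}:\ p^{(\lambda_A,\lambda_B)}(ab|xy)=p^{\lambda_A}_A(a|xy)\,p^{\lambda_B}_B(b|xy)\ \ \forall a,b,x,y\},$$ and its vertices are given by (elements of) $V$.
   Context: $\mathcal{P}_2^{AB,(\epsilon_A,\epsilon_B)}$ denotes the set of all conditional distributions $p=(p(ab|xy))$ for which there exist a probability space $(\Lambda,q)$ and measurable families of probability distributions $p_A(\cdot|x,y,\lambda)$ on $\mathcal{A}$ and $p_B(\cdot|x,y,\lambda)$ on $\mathcal{B}$ such that $p(ab|xy)=\int q(d\lambda)\,p_A(a|xy\lambda)\,p_B(b|xy\lambda)$ for all $a,b,x,y$, with $\frac12\sum_a|p_A(a|xy\lambda)-p_A(a|xy'\lambda)|\le\epsilon_A$ for all $x,y,y',\lambda$ and $\frac12\sum_b|p_B(b|xy\lambda)-p_B(b|x'y\lambda)|\le\epsilon_B$ for all $y,x,x',\lambda$. $\mathcal{P}_2^{A,\epsilon_A}$ is the set of all $(p(a|xy))_{a,x,y}$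 for which there exist $(\Lambda,q)$ and distributions $p_A(\cdot|x,y,\lambda)$ on $\mathcal{A}$ with $p(a|xy)=\int q(d\lambda)p_A(a|xy\lambda)$ and $\frac12\sum_a|p_A(a|xy\lambda)-p_A(a|xy'\lambda)|\le\epsilon_A$ for all $x,y,y',\lambda$. Analogously $\mathcal{P}_2^{B,\epsilon_B}$ is the set of all $(p(b|xy))_{b,x,y}$ of the form $\int q(d\lambda)p_B(b|xy\lambda)$ with $\frac12\sum_b|p_B(b|xy\lambda)-p_B(b|x'y\lambda)|\le\epsilon_B$ for all $y,x,x',\lambda$. (These two sets are convex polytopes.) *)

(* Defs.v *)
From HB Require Import structures.
From mathcomp Require Import all_boot all_order all_algebra.
From mathcomp Require Import all_classical all_reals all_analysis.
Set Implicit Arguments. Unset Strict Implicit. Unset Printing Implicit Defensive.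
Import Order.TTheory GRing.Theory Num.Theory.
Local Open Scope classical_set_scope.
Local Open Scope ring_scope.

Section Defs.
Variable R : realType.
Variables (X Y A B : finType).

Definition is_dist (T : finType) (d : T -> R) : Prop :=
  (forall t, 0 <= d t) /\ \sum_(t : T) d t = 1.

Definition tvd (T : finType) (d1 d2 : T -> R) : R :=
  2^-1 * \sum_(t : T) `|d1 t - d2 t|.

(* A-side local model: pA l a x y = p_A(a|x,y,lambda) *)
Definition localA (dL : measure_display) (L : measurableType dL)
    (eA : R) (pA : L -> A -> X -> Y -> R) : Prop :=
  (forall a x y, measurable_fun setT (fun l => pA l a x y)) /\
  (forall l x y, is_dist (fun a => pA l a x y)) /\
  (forall l x y y', tvd (fun a => pA l a x y) (fun a => pA l a x y') <= eA).

Definition localB (dL : measure_display) (L : measurableType dL)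
    (eB : R) (pB : L -> B -> X -> Y -> R) : Prop :=
  (forall b x y, measurable_fun setT (fun l => pB l b x y)) /\
  (forall l x y, is_dist (fun b => pB l b x y)) /\
  (forall l y x x', tvd (fun b => pB l b x y) (fun b => pB l b x' y) <= eB).

Definition P2AB (eA eB : R) : set (A -> B -> X -> Y -> R) :=
  [set p | exists (dL : measure_display) (L : measurableType dL)
     (q : probability L R) (pA : L -> A -> X -> Y -> R)
     (pB : L -> B -> X -> Y -> R),
     localA eA pA /\ localB eB pB /\
     forall a b x y, (p a b x y)%:E =
       (\int[q]_(l in setT) (pA l a x y * pB l b x y)%:E)%E].

Definition P2A (eA : R) : set (A -> X -> Y -> R) :=
  [set p | exists (dL : measure_display) (L : measurableType dL)
     (q : probability L R) (pA : L -> A -> X -> Y -> R),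
     localA eA pA /\
     forall a x y, (p a x y)%:E = (\int[q]_(l in setT) (pA l a x y)%:E)%E].

Definition P2B (eB : R) : set (B -> X -> Y -> R) :=
  [set p | exists (dL : measure_display) (L : measurableType dL)
     (q : probability L R) (pB : L -> B -> X -> Y -> R),
     localB eB pB /\
     forall b x y, (p b x y)%:E = (\int[q]_(l in setT) (pB l b x y)%:E)%E].
End Defs.

Section Convex.
Variable R : realType.
Variable I : Type.

Definition conv_hull (S : set (I -> R)) : set (I -> R) :=
  [set p | exists (n : nat) (w : 'I_n -> R) (v : 'I_n -> I -> R),
     (forall i, 0 <= w i) /\ \sum_(i < n) w i = 1 /\
     (forall i, S (v i)) /\ (forall c, p c = \sum_(i < n) w i * v i c)].

Definition is_vertex (S : set (I -> R)) (p : I -> R) : Prop :=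
  S p /\ forall (q r : I -> R) (t : R), S q -> S r -> 0 < t < 1 ->
    (forall c, p c = t * q c + (1 - t) * r c) -> q = p /\ r = p.

Definition vertices (S : set (I -> R)) : set (I -> R) := is_vertex S.
End Convex.

(* uncurrying to view conditional distributions as points of R^I *)
Definition uc3 {R : Type} {A X Y : Type} (p : A -> X -> Y -> R)
  : (A * X * Y) -> R := fun c => p c.1.1 c.1.2 c.2.
Definition uc4 {R : Type} {A B X Y : Type} (p : A -> B -> X -> Y -> R)
  : (A * B * X * Y) -> R := fun c => p c.1.1.1 c.1.1.2 c.1.2 c.2.

(* Main.v *)
Require Import Defs.
From HB Require Import structures.
From mathcomp Require Import all_boot all_order all_algebra.
From mathcomp Require Import all_classical all_reals all_analysis.
From mathcomp Require Import ring lra zify.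
From mathcomp Require Import measurable_realfun.
Set Implicit Arguments. Unset Strict Implicit. Unset Printing Implicit Defensive.
Import Order.TTheory GRing.Theory Num.Theory.
Local Open Scope classical_set_scope.
Local Open Scope ring_scope.

Section Poly.
Variable R : realType.
Variable I : finType.

Definition dot (a : {ffun I -> R}) (z : I -> R) : R := \sum_i a i * z i.
Definition cons_t := ({ffun I -> R} * R)%type.
Definition sat (S : seq cons_t) (z : I -> R) : Prop :=
  forall c, c \in S -> dot c.1 z <= c.2.

Lemma dotDZ a (u v : I -> R) e :
  dot a (fun i => u i + e * v i) = dot a u + e * dot a v.
Proof.
rewrite /dot mulr_sumr -big_split /=; apply: eq_bigr => i _; ring.
Qed.

Lemma exists_eps (T : eqType) (S : seq T) (P : pred T) (f : T -> R) :
  (forall c, c \in S -> P c -> 0 < f c) ->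
  exists2 e, 0 < e & forall c, c \in S -> P c -> e <= f c.
Proof.
elim: S => [|c S IH] H; first by exists 1 => //.
have [e e0 He] : exists2 e, 0 < e & forall c, c \in S -> P c -> e <= f c.
  by apply: IH => c' cS; apply: H; rewrite inE cS orbT.
case Pc: (P c).
- have fc : 0 < f c by apply: H; rewrite ?inE ?eqxx.
  exists (Num.min e (f c)); first by rewrite lt_min e0 fc.
  move=> c'; rewrite inE => /orP[/eqP->|c'S] Pc'; first by rewrite ge_min lexx orbT.
  by rewrite ge_min He.
- exists e => // c'; rewrite inE => /orP[/eqP->|c'S] Pc'; first by rewrite Pc in Pc'.
  exact: He.
Qed.

Lemma perturb S p d : sat S p ->
  (forall c, c \in S -> dot c.1 p = c.2 -> dot c.1 d = 0) ->
  exists2 e, 0 < e & sat S (fun i => p i + e * d i) /\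
                     sat S (fun i => p i + (- e) * d i).
Proof.
move=> Sp Hd.
have [|e e0 He] := @exists_eps _ S (fun c => dot c.1 p != c.2)
   (fun c => (c.2 - dot c.1 p) / (`|dot c.1 d| + 1)).
  move=> c cS /= nc; apply: divr_gt0; last by rewrite ltr_wpDl.
  by rewrite subr_gt0 lt_neqAle nc Sp.
have key : forall e', `|e'| <= e -> sat S (fun i => p i + e' * d i).
  move=> e' he' c cS; rewrite dotDZ.
  have [act|nact] := eqVneq (dot c.1 p) c.2.
    by rewrite (Hd _ cS act) mulr0 addr0 act.
  have := He c cS nact; rewrite ler_pdivlMr ?ltr_wpDl // => h.
  have h1 : e' * dot c.1 d <= e * `|dot c.1 d|.
    apply: le_trans (ler_norm _) _; rewrite normrM.
    by apply: ler_wpM2r.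
  have h2 : e * `|dot c.1 d| <= e * (`|dot c.1 d| + 1) by apply: ler_wpM2l; [exact: ltW | lra].
  lra.
exists e => //; split; apply: key; rewrite ?normrN gtr0_norm //.
Qed.

Lemma vertex_d0 S p d : is_vertex (sat S) p ->
  (forall c, c \in S -> dot c.1 p = c.2 -> dot c.1 d = 0) -> forall i, d i = 0.
Proof.
move=> [Sp Hv] Hd i.
have [e e0 [h1 h2]] := perturb Sp Hd.
have ht : 0 < (2:R)^-1 < 1 by rewrite invr_gt0 invf_lt1 ?ltr0n ?ltr1n.
have hp : forall c, p c = 2^-1 * (p c + e * d c) + (1 - 2^-1) * (p c + - e * d c).
  by move=> c; field; rewrite ?pnatr_eq0.
have [hq _] := Hv _ _ (2^-1) h1 h2 ht hp.
have := congr1 (fun f => f i) hq => /= h.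
have /eqP : e * d i = 0 by lra.
by rewrite mulf_eq0 gt_eqF //= => /eqP.
Qed.

Lemma dotB a (u v : I -> R) : dot a (fun i => u i - v i) = dot a u - dot a v.
Proof. by rewrite /dot -sumrB; apply: eq_bigr => i _; ring. Qed.

Lemma vert_eq S p p' : is_vertex (sat S) p -> is_vertex (sat S) p' ->
  (forall c, c \in S -> (dot c.1 p == c.2) = (dot c.1 p' == c.2)) -> p = p'.
Proof.
move=> vp vp' H; apply/funext => i.
have := @vertex_d0 S p (fun i => p' i - p i) vp.
move=> /(_ _ i) h; apply/esym/eqP; rewrite -subr_eq0; apply/eqP; apply: h.
move=> c cS act; rewrite dotB act; have := H c cS; rewrite act eqxx => /esym/eqP->.
by rewrite subrr.
Qed.

Definition c0 : cons_t := ([ffun=> 0], 0).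
Definition mask S (p : I -> R) : {ffun 'I_(size S) -> bool} :=
  [ffun k : 'I_(size S) => dot (nth c0 S k).1 p == (nth c0 S k).2].

Lemma mask_eq S p p' : mask S p = mask S p' ->
  forall c, c \in S -> (dot c.1 p == c.2) = (dot c.1 p' == c.2).
Proof.
move=> h c cS; have hk : (index c S < size S)%N by rewrite index_mem.
have := congr1 (fun f : {ffun 'I_(size S) -> bool} => f (Ordinal hk)) h; rewrite !ffunE /= nth_index //.
Qed.

Lemma enum_vertices S : exists (J : finType) (vv : J -> I -> R),
  range vv = vertices (sat S).
Proof.
pose J := {m : {ffun 'I_(size S) -> bool} |
   `[< exists v, is_vertex (sat S) v /\ mask S v = m >]}.
have H (j : J) : exists v, is_vertex (sat S) v /\ mask S v = val j.
  exact/asboolP/(valP j).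
pose vv (j : J) := projT1 (cid (H j)).
have vvP (j : J) : is_vertex (sat S) (vv j) /\ mask S (vv j) = val j.
  exact: (projT2 (cid (H j))).
exists J, vv; apply/seteqP; split.
  by move=> _ [j _ <-]; exact: (vvP j).1.
move=> v vv'.
have hj : `[< exists w, is_vertex (sat S) w /\ mask S w = mask S v >].
  by apply/asboolP; exists v.
exists (@exist _ (fun m => `[< exists w, is_vertex (sat S) w /\ mask S w = m >]) (mask S v) hj) => //.
apply: vert_eq => //; first exact: (vvP _).1.
  exact: vv'.
by apply: mask_eq; exact: (vvP _).2.
Qed.

Lemma finite_vertices S : finite_set (vertices (sat S)).
Proof.
have [J [vv <-]] := enum_vertices S.
exact/finite_image/finite_finset.
Qed.


Lemma splitL m n (a : 'I_m) : fintype.split (lshift n a) = inl a.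
Proof. exact: (unsplitK (inl a)). Qed.
Lemma splitR m n (b : 'I_n) : fintype.split (rshift m b) = inr b.
Proof. exact: (unsplitK (inr b)). Qed.

Lemma conv_mix (V : set (I -> R)) x y t : conv_hull V x -> conv_hull V y ->
  0 <= t <= 1 -> conv_hull V (fun i => t * x i + (1 - t) * y i).
Proof.
move=> [n1 [w1 [v1 [h1 [s1 [V1 e1]]]]]] [n2 [w2 [v2 [h2 [s2 [V2 e2]]]]]] /andP[t0 t1].
exists (n1 + n2)%N.
exists (fun k => match fintype.split k with inl a => t * w1 a | inr b => (1 - t) * w2 b end).
exists (fun k => match fintype.split k with inl a => v1 a | inr b => v2 b end).
split; [|split; [|split]].
- move=> k; case: fintype.split => a; apply: mulr_ge0 => //; lra.
- rewrite big_split_ord /=.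
  under eq_bigr do rewrite splitL. under [X in _ + X = _]eq_bigr do rewrite splitR.
  by rewrite -!mulr_sumr s1 s2; ring.
- by move=> k; case: fintype.split.
- move=> c; rewrite big_split_ord /=.
  under [X in _ = X + _]eq_bigr do rewrite splitL.
  under [X in _ = _ + X]eq_bigr do rewrite splitR.
  rewrite e1 e2 !mulr_sumr; congr (_ + _); apply: eq_bigr => i _; ring.
Qed.

Lemma dot_comb a (u v : I -> R) t :
  dot a (fun i => t * u i + (1 - t) * v i) = t * dot a u + (1 - t) * dot a v.
Proof. rewrite /dot !mulr_sumr -big_split; apply: eq_bigr => i _ /=; ring. Qed.

Lemma dotN a (u : I -> R) : dot a (fun i => - u i) = - dot a u.
Proof. rewrite /dot -sumrN; apply: eq_bigr => i _ /=; ring. Qed.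

Definition act (p : I -> R) := fun c : cons_t => dot c.1 p == c.2.

Lemma vertex_or_dir S p : sat S p -> is_vertex (sat S) p \/
  exists d : I -> R, (exists i, d i != 0) /\
     (forall c, c \in S -> dot c.1 p = c.2 -> dot c.1 d = 0).
Proof.
move=> Sp; case: (EM (exists d : I -> R, (exists i, d i != 0) /\
     (forall c, c \in S -> dot c.1 p = c.2 -> dot c.1 d = 0))) => h; first by right.
left; split => // q r t Sq Sr /andP[t0 t1] hp.
have hpf : p = (fun i => t * q i + (1 - t) * r i) by apply/funext => i; exact: hp.
have Hq : forall c, c \in S -> dot c.1 p = c.2 -> dot c.1 (fun i => q i - p i) = 0.
  move=> c cS act; rewrite dotB.
  have e : dot c.1 p = t * dot c.1 q + (1 - t) * dot c.1 r by rewrite {1}hpf dot_comb.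
  have := Sq c cS; have := Sr c cS; nra.
have qp : q = p.
  apply/funext => i; apply: contra_notP h => hne; exists (fun i => q i - p i).
  by split => //; exists i; rewrite subr_eq0; apply/eqP.
split => //; apply/funext => i; have := hp i; rewrite qp => hi.
have : (1 - t) * (r i - p i) = 0 by lra.
move/eqP; rewrite mulf_eq0 => /orP[/eqP|]; first lra.
by rewrite subr_eq0 => /eqP.
Qed.

Lemma exists_argmin (T : eqType) (S : seq T) (P : pred T) (f : T -> R) :
  (exists2 c, c \in S & P c) ->
  exists c, [/\ c \in S, P c & forall c', c' \in S -> P c' -> f c <= f c'].
Proof.
elim: S => [[c]//|c S IH] [c' c'S Pc'].
case: (EM (exists2 c, c \in S & P c)) => hS.
  have [m [mS Pm Hm]] := IH hS.
  case Pc: (P c).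
    case: (lerP (f c) (f m)) => hcm.
      exists c; split; rewrite ?inE ?eqxx // => x; rewrite inE => /orP[/eqP->//|xS] Px.
      exact: le_trans hcm (Hm _ xS Px).
    exists m; split; rewrite ?inE ?mS ?orbT // => x; rewrite inE => /orP[/eqP->|xS] Px.
      exact: ltW.
    exact: Hm.
  exists m; split; rewrite ?inE ?mS ?orbT // => x; rewrite inE => /orP[/eqP->|xS] Px.
    by rewrite Pc in Px.
  exact: Hm.
have Pc : P c.
  move: c'S Pc'; rewrite inE => /orP[/eqP->//|c'S] Pc'.
  by case: hS; exists c'.
exists c; split; rewrite ?inE ?eqxx // => x; rewrite inE => /orP[/eqP->//|xS] Px.
by case: hS; exists x.
Qed.

Lemma count_le_in (T : eqType) (S : seq T) (P Q : pred T) :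
  (forall c, c \in S -> P c -> Q c) -> (count P S <= count Q S)%N.
Proof.
elim: S => [//|c S IH] H /=.
have H' : forall x, x \in S -> P x -> Q x.
  by move=> x xS; apply: H; rewrite inE xS orbT.
have := IH H'; case Pc: (P c); last by case: (Q c) => /=; lia.
by rewrite (H c) ?inE ?eqxx //=; lia.
Qed.

Lemma count_lt (T : eqType) (S : seq T) (P Q : pred T) :
  (forall c, c \in S -> P c -> Q c) -> (exists2 c, c \in S & Q c && ~~ P c) ->
  (count P S < count Q S)%N.
Proof.
elim: S => [_ [c]//|c S IH] H [c' c'S hc'] /=.
have H' : forall x, x \in S -> P x -> Q x.
  by move=> x xS; apply: H; rewrite inE xS orbT.
have le : (count P S <= count Q S)%N.
  exact: count_le_in.
move: c'S; rewrite inE => /orP[/eqP ec|c'S].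
  subst c'; case/andP: hc' => -> /negbTE -> /=; lia.
have := IH H' (ex_intro2 _ _ c' c'S hc').
case Pc: (P c); first by rewrite (H c) ?inE ?eqxx //=; lia.
case: (Q c) => /=; lia.
Qed.

Lemma push S p d : sat S p ->
  (forall c, c \in S -> dot c.1 p = c.2 -> dot c.1 d = 0) ->
  (exists2 c, c \in S & 0 < dot c.1 d) ->
  exists lam, [/\ 0 < lam, sat S (fun i => p i + lam * d i) &
     (count (act p) S < count (act (fun i => (p i + lam * d i)%R)) S)%N].
Proof.
move=> Sp hd0 hpos.
have [c [cS Pc Hc]] := @exists_argmin _ S (fun c => 0 < dot c.1 d)
   (fun c => (c.2 - dot c.1 p) / dot c.1 d) hpos.
have cin : dot c.1 p != c.2.
  by apply/eqP => e; have := hd0 c cS e; move=> h; rewrite h ltxx in Pc.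
have slack : 0 < c.2 - dot c.1 p by rewrite subr_gt0 lt_neqAle cin Sp.
exists ((c.2 - dot c.1 p) / dot c.1 d); split.
- exact: divr_gt0.
- move=> c' c'S; rewrite dotDZ.
  case: (lerP (dot c'.1 d) 0) => hd.
    have := Sp c' c'S; have : 0 <= (c.2 - dot c.1 p) / dot c.1 d by apply/ltW/divr_gt0.
    nra.
  have := Hc c' c'S hd; rewrite ler_pdivlMr // => h1.
  have := Sp c' c'S; lra.
- apply: count_lt.
    move=> c' c'S; rewrite /act dotDZ => /eqP e; apply/eqP.
    by rewrite (hd0 c' c'S e) mulr0 addr0.
  exists c => //; rewrite /act dotDZ cin andbT.
  by rewrite divfK ?(gt_eqF Pc) //; apply/eqP; ring.
Qed.


Lemma conv_single (V : set (I -> R)) v : V v -> conv_hull V v.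
Proof.
move=> Vv; exists 1%N, (fun=> 1), (fun=> v); split; [|split; [|split]].
- by move=> _; exact: ler01.
- by rewrite big_ord1.
- by [].
- by move=> c; rewrite big_ord1 mul1r.
Qed.

Lemma minkowski S :
  (forall d : I -> R, (exists i, d i != 0) -> exists2 c, c \in S & 0 < dot c.1 d) ->
  forall p, sat S p -> conv_hull (vertices (sat S)) p.
Proof.
move=> hb p Sp.
move: (leqnn (size S - count (act p) S)).
move: {2}(size S - count (act p) S)%N => k.
elim: k p Sp => [|k IH] p Sp hk.
- case: (vertex_or_dir Sp) => [vp|[d [dn hd]]]; first exact: conv_single.
  have [lam [_ _ hc]] := push Sp hd (hb d dn).
  have := count_size (act (fun i => (p i + lam * d i)%R)) S => h; exfalso.
  move: hk; rewrite leqn0 subn_eq0 => hk.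
  by have := leq_trans (leq_trans hc h) hk; rewrite ltnn.
case: (vertex_or_dir Sp) => [vp|[d [dn hd]]]; first exact: conv_single.
have [lam [l0 S1 hc1]] := push Sp hd (hb d dn).
have dn' : exists i, - d i != 0 by case: dn => i hi; exists i; rewrite oppr_eq0.
have hd' : forall c, c \in S -> dot c.1 p = c.2 -> dot c.1 (fun i => - d i) = 0.
  by move=> c cS e; rewrite dotN (hd c cS e) oppr0.
have [mu [m0 S2 hc2]] := push Sp hd' (hb _ dn').
have C1 := IH _ S1 ltac:(have := count_size (act (fun i => (p i + lam * d i)%R)) S; lia).
have C2 := IH _ S2 ltac:(have := count_size (act (fun i => (p i + mu * - d i)%R)) S; lia).
have ht : 0 <= mu / (lam + mu) <= 1.
  apply/andP; split; first by apply: divr_ge0; lra.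
  by rewrite ler_pdivrMr ?mul1r; lra.
have := conv_mix C1 C2 ht.
have -> : (fun i => mu / (lam + mu) * (p i + lam * d i) +
      (1 - mu / (lam + mu)) * (p i + mu * - d i)) = p.
  apply/funext => i; field; lra.
done.
Qed.


Lemma sat_cat s1 s2 z : sat (s1 ++ s2) z <-> sat s1 z /\ sat s2 z.
Proof.
split=> [h|[h1 h2]].
  by split=> c cS; apply: h; rewrite mem_cat cS ?orbT.
by move=> c; rewrite mem_cat => /orP[] cS; [apply: h1|apply: h2].
Qed.

Lemma sat_map (T : finType) (f : T -> cons_t) z :
  sat [seq f t | t <- enum T] z <-> forall t, dot (f t).1 z <= (f t).2.
Proof.
split=> [h t|h c /mapP[t _ ->]]; last exact: h.
by apply: h; apply: map_f; rewrite mem_enum.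
Qed.

Lemma sat_cons c s z : sat (c :: s) z <-> dot c.1 z <= c.2 /\ sat s z.
Proof.
split=> [h|[h1 h2]].
  by split; [apply: h; rewrite inE eqxx|move=> c' cS; apply: h; rewrite inE cS orbT].
by move=> c'; rewrite inE => /orP[/eqP->//|]; apply: h2.
Qed.

Definition upd (z : I -> R) k t := fun i => if i == k then t else z i.

Lemma dot_upd a z k t : dot a (upd z k t) = dot a z + a k * (t - z k).
Proof.
rewrite /dot (bigD1 k) //= [X in _ = X + _](bigD1 k) //= /upd eqxx.
have -> : \sum_(i | i != k) a i * (if i == k then t else z i) =
          \sum_(i | i != k) a i * z i.
  by apply: eq_bigr => i /negbTE ->.
ring.
Qed.

Definition comb k (cp cn : cons_t) : cons_t :=
  ([ffun i => - cn.1 k * cp.1 i + cp.1 k * cn.1 i], - cn.1 k * cp.2 + cp.1 k * cn.2).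

Lemma dot_comb2 k cp cn z :
  dot (comb k cp cn).1 z = - cn.1 k * dot cp.1 z + cp.1 k * dot cn.1 z.
Proof.
rewrite /dot !mulr_sumr -big_split; apply: eq_bigr => i _ /=; rewrite ffunE; ring.
Qed.

Definition elim (k : I) (S : seq cons_t) : seq cons_t :=
  [seq c : cons_t <- S | c.1 k == 0] ++
  [seq comb k cp cn | cp <- [seq c : cons_t <- S | 0 < c.1 k], cn <- [seq c : cons_t <- S | c.1 k < 0]].

Lemma elim_sound k S z t : sat S (upd z k t) -> sat (elim k S) z.
Proof.
move=> h c; rewrite mem_cat => /orP[|/allpairsP[[cp cn] /= [hp hn ->]]].
  rewrite mem_filter => /andP[/eqP ck cS].
  by have := h c cS; rewrite dot_upd ck mul0r addr0.
move: hp hn; rewrite !mem_filter => /andP[hp pS] /andP[hn nS].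
have e : forall c : cons_t, dot c.1 z = dot c.1 (upd z k t) - c.1 k * (t - z k).
  by move=> c'; rewrite dot_upd; ring.
rewrite dot_comb2 /= (e cp) (e cn).
have := h _ pS; have := h _ nS; nra.
Qed.

Lemma exists_between (ls us : seq R) :
  (forall l u, l \in ls -> u \in us -> l <= u) ->
  exists t, (forall l, l \in ls -> l <= t) /\ (forall u, u \in us -> t <= u).
Proof.
elim: ls => [|l ls IH] H.
  clear H; elim: us => [|u us IHu]; first by exists 0.
  have [t [_ Ht]] := IHu; exists (Num.min u t); split=> // u'.
  rewrite inE => /orP[/eqP->|u'S]; first by rewrite ge_min lexx.
  by rewrite ge_min (Ht _ u'S) orbT.
have [t [Hl Hu]] : exists t, (forall l, l \in ls -> l <= t) /\ (forall u, u \in us -> t <= u).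
  by apply: IH => l' u l'S uS; apply: H => //; rewrite inE l'S orbT.
exists (Num.max l t); split.
  move=> l'; rewrite inE => /orP[/eqP->|l'S]; first by rewrite le_max lexx.
  by rewrite le_max (Hl _ l'S) orbT.
by move=> u uS; rewrite ge_max Hu // andbT; apply: H; rewrite ?inE ?eqxx.
Qed.

Lemma elim_complete k S z : sat (elim k S) z -> exists t, sat S (upd z k t).
Proof.
move=> h.
pose r (c : cons_t) := dot c.1 z - c.1 k * z k.
pose f (c : cons_t) := (c.2 - r c) / c.1 k.
have [|t [Hl Hu]] := @exists_between [seq f c | c <- [seq c : cons_t <- S | c.1 k < 0]]
   [seq f c | c <- [seq c : cons_t <- S | 0 < c.1 k]].
  move=> _ _ /mapP[cn hn ->] /mapP[cp hp ->].
  have hc : comb k cp cn \in elim k S.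
    by rewrite mem_cat; apply/orP; right; apply: allpairs_f.
  have := h _ hc; rewrite dot_comb2 /=.
  move: hp hn; rewrite !mem_filter => /andP[hp _] /andP[hn _].
  rewrite /f /r.
  set a := cp.2 - _; set b := cn.2 - _.
  have ea : a = a / cp.1 k * cp.1 k by rewrite divfK ?gt_eqF.
  have eb : b = b / cn.1 k * cn.1 k by rewrite divfK ?lt_eqF.
  move: ea eb; rewrite /a /b; set x := _ / cp.1 k; set y := _ / cn.1 k.
  move=> ea eb hcomb.
  have h1 : - cn.1 k * (cp.2 - (dot cp.1 z - cp.1 k * z k)) +
    cp.1 k * (cn.2 - (dot cn.1 z - cn.1 k * z k)) >= 0 by lra.
  rewrite {}ea {}eb in h1.
  have : cp.1 k * cn.1 k * (y - x) >= 0 by lra.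
  have : cp.1 k * cn.1 k < 0 by rewrite pmulr_rlt0.
  nra.
exists t => c cS; rewrite dot_upd.
case: (ltgtP (c.1 k) 0) => hck.
- have := Hl (f c) (map_f _ _); rewrite mem_filter hck cS => /(_ erefl).
  rewrite /f /r ler_ndivrMr // => h1; lra.
- have := Hu (f c) (map_f _ _); rewrite mem_filter hck cS => /(_ erefl).
  rewrite /f /r ler_pdivlMr // => h1; lra.
- have : c \in elim k S by rewrite mem_cat mem_filter hck eqxx cS.
  by move/h; rewrite hck mul0r addr0.
Qed.

Fixpoint elims (ks : seq I) (S : seq cons_t) : seq cons_t := if ks is k :: ks' then elim k (elims ks' S) else S.

Lemma elims_spec ks S z : sat (elims ks S) z <->
  exists z', (forall i, i \notin ks -> z' i = z i) /\ sat S z'.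
Proof.
elim: ks z => [|k ks IH] z /=.
  split=> [h|[z' [h1 h2]]]; first by exists z.
  by have -> : z = z' by apply/funext => i; rewrite h1.
split=> [/elim_complete [t /IH [z' [h1 h2]]]|[z' [h1 h2]]].
  exists z'; split=> // i; rewrite inE negb_or => /andP[ik iks].
  by rewrite h1 // /upd (negbTE ik).
apply: (@elim_sound _ _ _ (z' k)); apply/IH; exists z'; split=> // i iks.
rewrite /upd; case: eqP => [->//|/eqP ik]; apply: h1.
by rewrite inE negb_or ik.
Qed.

End Poly.

Section Hrep.
Variable R : realType.
Variables I0 J : finType.
Variable vv : J -> I0 -> R.

Local Notation K := (I0 + J)%type.

Lemma sum_delta (T : finType) (j : T) (f : T -> R) :
  \sum_(j' : T) (j' == j)%:R * f j' = f j.
Proof.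
rewrite (bigD1 j) //= eqxx mul1r big1 ?addr0 // => j' /negbTE ->; by rewrite mul0r.
Qed.

Definition fw (j : J) : {ffun K -> R} :=
  [ffun k => if k is inr j' then - (j' == j)%:R else 0].
Definition fs (s : R) : {ffun K -> R} := [ffun k => if k is inr _ then s else 0].
Definition fx (s : R) (i : I0) : {ffun K -> R} :=
  [ffun k => match k with inl i' => s * (i' == i)%:R | inr j => - s * vv j i end].

Definition S0 : seq (cons_t R K) :=
  [seq (fw j, 0) | j <- enum J] ++ [:: (fs 1, 1); (fs (-1), -1)]
  ++ [seq (fx 1 i, 0) | i <- enum I0] ++ [seq (fx (-1) i, 0) | i <- enum I0].

Lemma S0_spec z : sat S0 z <->
  [/\ forall j, 0 <= z (inr j), \sum_j z (inr j) = 1 &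
      forall i, z (inl i) = \sum_j vv j i * z (inr j)].
Proof.
have d1 j : dot (fw j) z = - z (inr j).
  rewrite /dot big_sumType /=.
  rewrite big1 ?add0r; last by move=> i _; rewrite ffunE mul0r.
  under eq_bigr do rewrite ffunE mulNr.
  by rewrite sumrN sum_delta.
have d2 (s : R) : dot (fs s) z = s * \sum_j z (inr j).
  rewrite /dot big_sumType /= big1 ?add0r; last by move=> i _; rewrite ffunE mul0r.
  by rewrite mulr_sumr; apply: eq_bigr => j _; rewrite ffunE.
have d3 (s : R) i : dot (fx s i) z = s * (z (inl i) - \sum_j vv j i * z (inr j)).
  rewrite /dot big_sumType /=.
  under eq_bigr do rewrite ffunE -mulrA.
  under [X in _ + X = _]eq_bigr do rewrite ffunE.
  rewrite -mulr_sumr sum_delta mulrBr mulr_sumr -sumrN; congr (_ + _).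
  by apply: eq_bigr => j _; ring.
rewrite /S0 !sat_cat !sat_map !sat_cons /=.
rewrite !(d2 1) !(d2 (-1)).
split.
- move=> [h1 [[h2 [h3 _]] [h4 h5]]]; split.
  + by move=> j; have := h1 j; rewrite d1; lra.
  + lra.
  + move=> i; have := h4 i; have := h5 i; rewrite !d3; lra.
- move=> [h1 h2 h3]; split; [|split; [split; [|split]|split]] => //.
  + by move=> j; rewrite d1; have := h1 j; lra.
  + lra.
  + lra.
  + by move=> i; rewrite d3 -h3 subrr mulr0.
  + by move=> i; rewrite d3 -h3 subrr mulr0.
Qed.

Definition ext (x : I0 -> R) : K -> R := fun k => if k is inl i then x i else 0.
Definition restr (c : cons_t R K) : cons_t R I0 := ([ffun i => c.1 (inl i)], c.2).

Lemma dot_restr c x : dot (restr c).1 x = dot c.1 (ext x).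
Proof.
rewrite /dot big_sumType /= [X in _ = _ + X]big1 ?addr0; last by move=> j _; rewrite mulr0.
by apply: eq_bigr => i _; rewrite ffunE.
Qed.

Lemma conv_hrep : exists T : seq (cons_t R I0), forall x : I0 -> R,
  sat T x <-> exists w : J -> R, [/\ forall j, 0 <= w j, \sum_j w j = 1 &
     forall i, x i = \sum_j w j * vv j i].
Proof.
pose ks := [seq (inr j : K) | j <- enum J].
exists (map restr (elims ks S0)) => x.
have e1 : sat (map restr (elims ks S0)) x <-> sat (elims ks S0) (ext x).
  split=> h c.
    by move=> cS; rewrite -dot_restr; apply: h; apply: map_f.
  by move=> /mapP[c' cS ->]; rewrite dot_restr; apply: h.
rewrite e1 elims_spec; split.
- move=> [z' [h1 /S0_spec [h2 h3 h4]]]; exists (fun j => z' (inr j)); split => //.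
  move=> i; have hi : (inl i : K) \notin ks by apply/mapP => -[j _].
  by rewrite -[x i]/(ext x (inl i)) -(h1 _ hi) h4; apply: eq_bigr => j _; rewrite mulrC.
- move=> [w [h1 h2 h3]].
  exists (fun k => match k with inl i => x i | inr j => w j end); split.
    move=> [i|j] //; by rewrite mem_map ?mem_enum //; move=> a b [].
  apply/S0_spec; split => // i; rewrite h3; apply: eq_bigr => j _; exact: mulrC.
Qed.

End Hrep.

Section Integ.
Variable R : realType.
Local Open Scope ereal_scope.

Lemma int_bnd d (L : measurableType d) (q : probability L R) (h : L -> R) (M : R) :
  measurable_fun setT h -> (forall l, `|h l| <= M)%R ->
  q.-integrable setT (fun l => (h l)%:E).
Proof.
move=> mh hM; apply: (@le_integrable _ _ _ q setT measurableT _ (EFin \o cst M)).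
- exact/measurable_EFinP.
- move=> l _ /=; rewrite lee_fin; apply: le_trans (hM l) _.
  exact: ler_norm.
- exact: finite_measure_integrable_cst.
Qed.

Lemma int_sat (I : finType) d (L : measurableType d) (q : probability L R)
  (f : L -> I -> R) (g : I -> R) (T : seq (cons_t R I)) :
  (forall i, measurable_fun setT (fun l => f l i)) ->
  (forall l i, 0 <= f l i <= 1)%R ->
  (forall i, (g i)%:E = \int[q]_(l in setT) (f l i)%:E) ->
  (forall l, sat T (f l)) -> sat T g.
Proof.
move=> mf hb hg hT c cT.
have ii : forall i, q.-integrable setT (fun l => (c.1 i)%:E * (f l i)%:E).
  move=> i; apply: integrableZl => //; apply: (@int_bnd _ _ q (fun l => f l i) 1%R) => //.
  by move=> l; have /andP[h0 h1] := hb l i; rewrite ger0_norm.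
have e : (dot c.1 g)%:E = \int[q]_(l in setT) (dot c.1 (f l))%:E.
  have e1 : (dot c.1 g)%:E = \sum_i (c.1 i)%:E * \int[q]_(l in setT) (f l i)%:E.
    by rewrite /dot -sumEFin; apply: eq_bigr => i _; rewrite EFinM hg.
  have e2 : \int[q]_(l in setT) (dot c.1 (f l))%:E =
      \sum_i \int[q]_(l in setT) ((c.1 i)%:E * (f l i)%:E).
    rewrite -integral_sum //; apply: eq_integral => l _.
    by rewrite /dot -sumEFin; apply: eq_bigr => i _; rewrite EFinM.
  rewrite e1 e2; apply: eq_bigr => i _; rewrite integralZl //.
  by apply: (@int_bnd _ _ q (fun l => f l i) 1%R) => // l;
    have /andP[h0 h1] := hb l i; rewrite ger0_norm.
have intd : q.-integrable setT (fun l => (dot c.1 (f l))%:E).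
  have isum : q.-integrable setT
      (fun l => \sum_(i <- index_enum I | xpredT i) (c.1 i)%:E * (f l i)%:E).
    by apply: integrable_sum => [|i _]; [exact: measurableT|exact: ii].
  apply: eq_integrable isum; first exact: measurableT.
  by move=> l _ /=; rewrite /dot -sumEFin; apply: eq_bigr => i _; rewrite EFinM.
rewrite -lee_fin e.
apply: le_trans (@le_integral _ _ _ q setT measurableT _ (EFin \o cst c.2) intd
   (finite_measure_integrable_cst _ _ measurableT) _) _.
  by move=> l _ /=; rewrite lee_fin; exact: hT.
rewrite (_ : \int[q]_(l in setT) (EFin \o cst c.2) l = \int[q]_(l in setT) cst c.2%:E l) //.
rewrite integral_cst // -[X in _ <= X]mule1 le_eqVlt; apply/orP; left; apply/eqP.
congr (_ * _); exact: probability_setT.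
Qed.

End Integ.

Section Local.
Variable R : realType.
Variables (O Fx W Cx : finType) (idx : O -> Fx -> W -> Cx) (e : R).

Definition lc (U : finType) (w : U -> R) (v : U -> Cx) : {ffun Cx -> R} :=
  [ffun k => \sum_u w u * (k == v u)%:R].

Lemma dot_lc (U : finType) (w : U -> R) (v : U -> Cx) z :
  dot (lc w v) z = \sum_u w u * z (v u).
Proof.
rewrite /dot.
under eq_bigr do rewrite ffunE mulr_suml.
rewrite exchange_big /=; apply: eq_bigr => u _.
rewrite -[RHS](sum_delta (v u) (fun k => w u * z k)).
by apply: eq_bigr => k _; ring.
Qed.

Definition sgnb (b : bool) : R := if b then 1 else -1.

Definition SS : seq (cons_t R Cx) :=
  [seq (lc (fun _ : 'I_1 => -1) (fun _ => i), 0) | i <- enum Cx]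
  ++ [seq (lc (fun _ : 'I_1 => 1) (fun _ => i), 1) | i <- enum Cx]
  ++ [seq (lc (fun _ : O => 1) (fun o => idx o t.1 t.2), 1) | t <- enum {: Fx * W}]
  ++ [seq (lc (fun _ : O => -1) (fun o => idx o t.1 t.2), -1) | t <- enum {: Fx * W}]
  ++ [seq (lc (fun ob : O * bool => if ob.2 then sgnb (t.2 ob.1) else - sgnb (t.2 ob.1))
             (fun ob => if ob.2 then idx ob.1 t.1.1.1 t.1.1.2 else idx ob.1 t.1.1.1 t.1.2),
           2 * e) | t : Fx * W * W * {ffun O -> bool} <- enum {: Fx * W * W * {ffun O -> bool}}].

Lemma SS_spec z : sat SS z <->
  [/\ forall i, 0 <= z i <= 1,
      forall f w, \sum_o z (idx o f w) = 1 &
      forall f w w' (sg : {ffun O -> bool}),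
        \sum_o sgnb (sg o) * (z (idx o f w) - z (idx o f w')) <= 2 * e].
Proof.
rewrite /SS !sat_cat !sat_map /=.
have E1 i (s : R) : dot (lc (fun _ : 'I_1 => s) (fun _ => i)) z = s * z i.
  by rewrite dot_lc big_ord1.
have E2 f w (s : R) : dot (lc (fun _ : O => s) (fun o => idx o f w)) z =
    s * \sum_o z (idx o f w).
  by rewrite dot_lc mulr_sumr.
have E3 f w w' (sg : {ffun O -> bool}) :
  dot (lc (fun ob : O * bool => if ob.2 then sgnb (sg ob.1) else - sgnb (sg ob.1))
     (fun ob => if ob.2 then idx ob.1 f w else idx ob.1 f w')) z =
  \sum_o sgnb (sg o) * (z (idx o f w) - z (idx o f w')).
  rewrite dot_lc -(pair_big xpredT xpredT (fun o b =>
    (if b then sgnb (sg o) else - sgnb (sg o)) * z (if b then idx o f w else idx o f w'))).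
  by apply: eq_bigr => o _; rewrite big_bool /=; ring.
split.
- move=> [h1 [h2 [h3 [h4 h5]]]]; split.
  + move=> i; have := h1 i; have := h2 i; rewrite !E1; lra.
  + move=> f w; have := h3 (f, w); have := h4 (f, w); rewrite /= !E2; lra.
  + move=> f w w' sg; have := h5 (f, w, w', sg); by rewrite /= E3.
- move=> [h1 h2 h3]; split; [|split; [|split; [|split]]].
  + by move=> i; rewrite E1; have := h1 i; lra.
  + by move=> i; rewrite E1; have := h1 i; lra.
  + by move=> [f w]; rewrite /= E2 h2 mulr1.
  + by move=> [f w]; rewrite /= E2 h2 mulr1.
  + by move=> [[[f w] w'] sg]; rewrite /= E3.
Qed.

Lemma tv_iff (d1 d2 : O -> R) : tvd d1 d2 <= e <->
  forall sg : {ffun O -> bool}, \sum_o sgnb (sg o) * (d1 o - d2 o) <= 2 * e.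
Proof.
rewrite /tvd; split=> [h sg|h].
  apply: le_trans (_ : \sum_o `|d1 o - d2 o| <= _).
    apply: ler_sum => o _; rewrite /sgnb; case: (sg o); rewrite ?mul1r ?mulN1r.
      exact: ler_norm.
    by rewrite -normrN; exact: ler_norm.
  have : 0 < (2:R)^-1 by rewrite invr_gt0.
  move: h; set s := \sum_o _; move=> h h2.
  have -> : s = 2 * (2^-1 * s) by field.
  by rewrite ler_pM2l.
have := h [ffun o => 0 <= d1 o - d2 o].
have -> : \sum_o sgnb ([ffun o => 0 <= d1 o - d2 o] o) * (d1 o - d2 o) =
          \sum_o `|d1 o - d2 o|.
  apply: eq_bigr => o _; rewrite ffunE /sgnb.
  case: leP => h0; first by rewrite mul1r ger0_norm.
  by rewrite mulN1r ltr0_norm.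
set s := \sum_o _ => hs.
have -> : e = 2^-1 * (2 * e) by field.
by rewrite ler_pM2l // invr_gt0.
Qed.

Lemma SS_dir : forall d : Cx -> R, (exists i, d i != 0) ->
  exists2 c, c \in SS & 0 < dot c.1 d.
Proof.
move=> d [i hi]; case: (ltgtP (d i) 0) => h; last by rewrite h eqxx in hi.
- exists (lc (fun _ : 'I_1 => -1) (fun _ => i), 0).
    by rewrite /SS mem_cat; apply/orP; left; apply: map_f; rewrite mem_enum.
  by rewrite /= dot_lc big_ord1; lra.
- exists (lc (fun _ : 'I_1 => 1) (fun _ => i), 1).
    rewrite /SS mem_cat; apply/orP; right; rewrite mem_cat; apply/orP; left.
    by apply: map_f; rewrite mem_enum.
  by rewrite /= dot_lc big_ord1; lra.
Qed.


Hypothesis idx_surj : forall i, exists o f w, i = idx o f w.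

Lemma loc_gen z :
  ((forall f w, is_dist (fun o => z (idx o f w))) /\
   (forall f w w', tvd (fun o => z (idx o f w)) (fun o => z (idx o f w')) <= e))
  <-> sat SS z.
Proof.
rewrite SS_spec; split.
- move=> [hd ht]; split.
  + move=> i; have [u [f [w ->]]] := idx_surj i.
    have [h0 h1] := hd f w; rewrite h0 /=.
    rewrite -h1 (bigD1 u) //= lerDl; apply: sumr_ge0 => u' _; exact: h0.
  + by move=> f w; have [_ ->] := hd f w.
  + by move=> f w w' sg; have /tv_iff := ht f w w'; apply.
- move=> [h1 h2 h3]; split.
  + move=> f w; split; last exact: h2.
    by move=> u; case/andP: (h1 (idx u f w)).
  + by move=> f w w'; apply/tv_iff => sg; apply: h3.
Qed.

End Local.

Definition idxA (A X Y : finType) (a : A) (x : X) (y : Y) : (A * X * Y)%type := (a, x, y).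
Definition idxB (B X Y : finType) (b : B) (y : Y) (x : X) : (B * X * Y)%type := (b, x, y).

Lemma idxA_surj (A X Y : finType) i : exists a x y, i = @idxA A X Y a x y.
Proof. by case: i => -[a x] y; exists a, x, y. Qed.
Lemma idxB_surj (B X Y : finType) i : exists b y x, i = @idxB B X Y b y x.
Proof. by case: i => -[b x] y; exists b, y, x. Qed.

Section Sides.
Variable R : realType.
Variables (X Y A B : finType) (eA eB : R).

Definition SA := SS (@idxA A X Y) eA.
Definition SB := SS (@idxB B X Y) eB.

Lemma localA_sat (f : A -> X -> Y -> R) :
  ((forall x y, is_dist (fun a => f a x y)) /\
   (forall x y y', tvd (fun a => f a x y) (fun a => f a x y') <= eA))
  <-> sat SA (uc3 f).
Proof. exact: (loc_gen eA (@idxA_surj A X Y) (uc3 f)). Qed.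

Lemma localB_sat (f : B -> X -> Y -> R) :
  ((forall y x, is_dist (fun b => f b x y)) /\
   (forall y x x', tvd (fun b => f b x y) (fun b => f b x' y) <= eB))
  <-> sat SB (uc3 f).
Proof. exact: (loc_gen eB (@idxB_surj B X Y) (uc3 f)). Qed.

Lemma uc3K (O : finType) (z : (O * X * Y)%type -> R) :
  uc3 (fun a x y => z (a, x, y)) = z.
Proof. by apply/funext => -[[a x] y]. Qed.

Lemma P2A_eq : uc3 @` (@P2A R X Y A eA) = sat SA.
Proof.
apply/seteqP; split.
- move=> _ [p [dL [L [q [pA [[hm [hd ht]] hint]]]]] <-].
  have hs : forall l, sat SA (uc3 (pA l)).
    by move=> l; apply/(localA_sat (pA l)); split; [exact: hd|exact: ht].
  apply: (@int_sat _ _ _ _ q (fun l => uc3 (pA l))) => //.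
  + by move=> [[a x] y]; exact: hm.
  + move=> l i; have /SS_spec[h _ _] := hs l; exact: h.
  + by move=> [[a x] y]; exact: hint.
- move=> z hz.
  exists (fun a x y => z (a, x, y)); last exact: uc3K.
  exists default_measure_display, unit, (\d_tt : probability unit R).
  exists (fun _ a x y => z (a, x, y)); split.
    split; first by move=> a x y; exact: measurable_cst.
    have := proj2 (localA_sat (fun a x y => z (a, x, y))); rewrite uc3K.
    by move=> /(_ hz) [h1 h2]; split=> _; [exact: h1|exact: h2].
  move=> a x y; rewrite integral_cst //= diracT mule1 //.
Qed.

Lemma P2B_eq : uc3 @` (@P2B R X Y B eB) = sat SB.
Proof.
apply/seteqP; split.
- move=> _ [p [dL [L [q [pB [[hm [hd ht]] hint]]]]] <-].
  have hs : forall l, sat SB (uc3 (pB l)).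
    by move=> l; apply/(localB_sat (pB l)); split; [move=> y x; exact: hd|exact: ht].
  apply: (@int_sat _ _ _ _ q (fun l => uc3 (pB l))) => //.
  + by move=> [[a x] y]; exact: hm.
  + move=> l i; have /SS_spec[h _ _] := hs l; exact: h.
  + by move=> [[a x] y]; exact: hint.
- move=> z hz.
  exists (fun a x y => z (a, x, y)); last exact: uc3K.
  exists default_measure_display, unit, (\d_tt : probability unit R).
  exists (fun _ a x y => z (a, x, y)); split.
    split; first by move=> a x y; exact: measurable_cst.
    have := proj2 (localB_sat (fun a x y => z (a, x, y))); rewrite uc3K.
    by move=> /(_ hz) [h1 h2]; split=> _; [move=> x y; exact: h1|exact: h2].
  move=> a x y; rewrite integral_cst //= diracT mule1 //.
Qed.

End Sides.

Section WProb.
Variable R : realType.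
Variables (n : nat) (w : 'I_n -> R).
Hypothesis hw : forall i, 0 <= w i.
Hypothesis hs : \sum_i w i = 1.

Definition wz (k : nat) : R := if insub k is Some i then w i else 0.
Lemma wz_ge0 k : 0 <= wz k.
Proof. by rewrite /wz; case: insub. Qed.
Definition nn (k : nat) : {nonneg R} := NngNum (wz_ge0 k).
Definition mm : {measure set nat -> \bar R}^nat := fun k => mscale (nn k) \d_k.
Definition wmu (_ : \sum_i w i = 1) := msum mm n.
HB.instance Definition _ := Measure.copy (wmu hs) (msum mm n).

Lemma wz_ord (i : 'I_n) : wz i = w i.
Proof. by rewrite /wz valK. Qed.

Lemma wmu_setT : wmu hs setT = 1%E.
Proof.
rewrite /wmu /msum /mm /mscale /=.
rewrite (eq_bigr (fun k : 'I_n => (w k)%:E)); last first.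
  move=> k _; rewrite /mscale /= diracT mule1 /= wz_ord //.
by rewrite sumEFin hs.
Qed.

HB.instance Definition _ := Measure_isProbability.Build _ _ R (wmu hs) wmu_setT.

Lemma meas_nat (f : nat -> \bar R) : measurable_fun setT f.
Proof. by move=> _ Y _; exact: I. Qed.

Lemma wmu_int (F : nat -> R) : (forall k, 0 <= F k) ->
  (\int[wmu hs]_(l in setT) (F l)%:E = (\sum_i w i * F i)%:E)%E.
Proof.
move=> F0; rewrite /wmu ge0_integral_measure_sum //; last by move=> k _; rewrite lee_fin.
rewrite -sumEFin; apply: eq_bigr => i _.
rewrite /mm ge0_integral_mscale //; last by move=> k _; rewrite lee_fin.
by rewrite integral_dirac //= diracT mul1e /= wz_ord EFinM.
Qed.

End WProb.

Section ConvLemmas.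
Variable R : realType.
Variable I : finType.

Lemma sat_comb (T : seq (cons_t R I)) (K : finType) (wt : K -> R) (pts : K -> I -> R) x :
  (forall k, 0 <= wt k) -> \sum_k wt k = 1 -> (forall k, sat T (pts k)) ->
  (forall i, x i = \sum_k wt k * pts k i) -> sat T x.
Proof.
move=> h0 h1 hp hx c cT.
have -> : dot c.1 x = \sum_k wt k * dot c.1 (pts k).
  rewrite /dot; under eq_bigr do rewrite hx mulr_sumr.
  rewrite exchange_big /=; apply: eq_bigr => k _; rewrite mulr_sumr.
  by apply: eq_bigr => i _; ring.
rewrite -[c.2]mul1r -h1 mulr_suml; apply: ler_sum => k _.
by apply: ler_wpM2l => //; exact: hp.
Qed.

Lemma vert_conv (V : set (I -> R)) : vertices (conv_hull V) `<=` V.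
Proof.
move=> p [[n [w [v [hw [hs [hV hp]]]]]] hv].
have [i wi] : exists i, 0 < w i.
  case: (EM (exists i, 0 < w i)) => // hn; exfalso.
  have : \sum_i w i = 0.
    apply: big1 => i _; apply/eqP; rewrite eq_le hw andbT leNgt.
    by apply/negP => h; apply: hn; exists i.
  by rewrite hs => /eqP; rewrite oner_eq0.
have hsplit : forall c, p c = w i * v i c + \sum_(j | j != i) w j * v j c.
  by move=> c; rewrite hp (bigD1 i).
have hrest : \sum_(j | j != i) w j = 1 - w i by rewrite -hs [in RHS](bigD1 i) //= addrC addrK.
have wi1 : w i <= 1.
  by rewrite -hs (bigD1 i) //= lerDl; apply: sumr_ge0 => j _; exact: hw.
case: (ltP (w i) 1) => wi1'; last first.
  have wie : w i = 1 by apply/eqP; rewrite eq_le wi1 wi1'.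
  have h0 : forall j, j != i -> w j = 0.
    move=> j ji; apply/eqP; rewrite eq_le hw andbT.
    have : \sum_(k | k != i) w k = 0 by rewrite hrest wie subrr.
    move/eqP; rewrite psumr_eq0 => [/allP hall|k _]; last exact: hw.
    by rewrite (eqP (implyP (hall j (mem_index_enum j)) ji)).
  have -> : p = v i.
    apply/funext => c; rewrite hsplit wie mul1r big1 ?addr0 // => j ji.
    by rewrite h0 // mul0r.
  exact: hV.
pose w' j := if j == i then 0 else w j / (1 - w i).
have hr : conv_hull V (fun c => \sum_j w' j * v j c).
  exists n, w', v; split; [|split; [|split]] => //.
  - move=> j; rewrite /w'; case: eqP => // _; apply: divr_ge0 => //; lra.
  - rewrite (bigD1 i) //= /w' eqxx add0r.
    rewrite (eq_bigr (fun j => w j / (1 - w i))); last by move=> j /negbTE ->.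
    by rewrite -mulr_suml hrest divff // subr_eq0 eq_sym lt_eqF.
have hvi : conv_hull V (v i) by apply: conv_single.
have ht : 0 < w i < 1 by rewrite wi wi1'.
have [|h1 _] := hv _ _ (w i) hvi hr ht.
  move=> c; rewrite hsplit; congr (_ + _).
  rewrite [in RHS](bigD1 i) //= /w' eqxx mul0r add0r mulr_sumr; apply: eq_bigr => j /negbTE ->.
  by field; rewrite subr_eq0 eq_sym lt_eqF.
by rewrite -h1.
Qed.

End ConvLemmas.

Lemma meas_natR (R : realType) (f : nat -> R) : measurable_fun setT f.
Proof. by move=> _ Y _; exact: I. Qed.

Section MainSec.
Variable R : realType.
Variables (X Y A B : finType) (eA eB : R).
Variables (VA : set (A * X * Y -> R)) (VB : set (B * X * Y -> R)).
Hypothesis eVA : VA = vertices (sat (SA X Y A eA)).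
Hypothesis eVB : VB = vertices (sat (SB X Y B eB)).
Let V : set (A * B * X * Y -> R) :=
    [set v | exists pA pB, VA pA /\ VB pB /\
       v = (fun c => pA (c.1.1.1, c.1.2, c.2) * pB (c.1.1.2, c.1.2, c.2))].

Lemma P2AB_sub : uc4 @` @P2AB R X Y A B eA eB `<=` conv_hull V.
Proof.
move=> _ [p [dL [L [q [pA [pB [[hmA [hdA htA]] [[hmB [hdB htB]] hint]]]]]]] <-].
have hsA : forall l, sat (SA X Y A eA) (uc3 (pA l)).
  by move=> l; apply/(localA_sat eA (pA l)); split; [exact: hdA|exact: htA].
have hsB : forall l, sat (SB X Y B eB) (uc3 (pB l)).
  by move=> l; apply/(localB_sat eB (pB l)); split; [move=> y x; exact: hdB|exact: htB].
have [JA [vvA eA']] := enum_vertices (SA X Y A eA).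
have [JB [vvB eB']] := enum_vertices (SB X Y B eB).
pose vv (j : (JA * JB)%type) : (A * B * X * Y)%type -> R :=
  fun c => vvA j.1 (c.1.1.1, c.1.2, c.2) * vvB j.2 (c.1.1.2, c.1.2, c.2).
have [T hT] := conv_hrep vv.
have hvvT : forall j, sat T (vv j).
  move=> j; apply/hT; exists (fun j' => (j' == j)%:R); split.
  - by move=> j'; rewrite ler0n.
  - by rewrite (bigD1 j) //= eqxx big1 ?addr0 // => j' /negbTE ->.
  - by move=> i; rewrite sum_delta.
have hpt : forall l, sat T (fun c => pA l c.1.1.1 c.1.2 c.2 * pB l c.1.1.2 c.1.2 c.2).
  move=> l.
  have [nA [al [va [hal [sal [Val eal]]]]]] :=
    minkowski (SS_dir (@idxA A X Y) eA) (hsA l).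
  have [nB [be [vb [hbe [sbe [Vbe ebe]]]]]] :=
    minkowski (SS_dir (@idxB B X Y) eB) (hsB l).
  have hja : forall k, exists ja, vvA ja = va k.
    by move=> k; move: (Val k); rewrite -eA' => -[ja _ h]; exists ja.
  have hjb : forall k, exists jb, vvB jb = vb k.
    by move=> k; move: (Vbe k); rewrite -eB' => -[jb _ h]; exists jb.
  have [fa hfa] := choice hja.
  have [fb hfb] := choice hjb.
  apply: (@sat_comb _ _ T _ (fun km : 'I_nA * 'I_nB => al km.1 * be km.2)
            (fun km => vv (fa km.1, fb km.2))).
  - by move=> km; apply: mulr_ge0.
  - rewrite -(pair_big xpredT xpredT (fun k m => al k * be m)) /=.
    under eq_bigr do rewrite -mulr_sumr sbe mulr1.
    exact: sal.
  - by move=> km; exact: hvvT.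
  - move=> c; rewrite -(pair_big xpredT xpredT
        (fun k m => al k * be m * vv (fa k, fb m) c)) /=.
    have := eal (c.1.1.1, c.1.2, c.2); have := ebe (c.1.1.2, c.1.2, c.2).
    rewrite /uc3 /= => -> ->; rewrite big_distrlr /=.
    apply: eq_bigr => k _; apply: eq_bigr => m _.
    by rewrite /vv /= hfa hfb; ring.
have hTp : sat T (uc4 p).
  apply: (@int_sat _ _ _ _ q (fun l c => pA l c.1.1.1 c.1.2 c.2 * pB l c.1.1.2 c.1.2 c.2)) => //.
  - by move=> c; apply: measurable_funM; [exact: hmA|exact: hmB].
  - move=> l c.
    have /SS_spec[h1 _ _] := hsA l; have /SS_spec[h2 _ _] := hsB l.
    have /andP[a0 a1] := h1 (c.1.1.1, c.1.2, c.2).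
    have /andP[b0 b1] := h2 (c.1.1.2, c.1.2, c.2).
    by rewrite mulr_ge0 //= mulr_ile1.
  - by move=> [[[a b] x] y]; exact: hint.
have [wt [hw0 hw1 hwx]] := (hT (uc4 p)).1 hTp.
exists #|{: (JA * JB)%type}|, (fun i => wt (enum_val i)), (fun i => vv (enum_val i)).
split; [|split; [|split]].
- by move=> i; exact: hw0.
- by rewrite -big_enum_val /=; exact: hw1.
- move=> i; exists (vvA (enum_val i).1), (vvB (enum_val i).2); split; [|split] => //.
  + by rewrite eVA -eA'; exists (enum_val i).1.
  + by rewrite eVB -eB'; exists (enum_val i).2.
- by move=> c; rewrite hwx -(big_enum_val (fun j => wt j * vv j c)).
Qed.


Lemma hull_sub : conv_hull V `<=` uc4 @` @P2AB R X Y A B eA eB.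
Proof.
move=> z [n [w [v [hw [hs [hV hz]]]]]].
have satVA : forall u, VA u -> sat (SA X Y A eA) u by move=> u; rewrite eVA => -[].
have satVB : forall u, VB u -> sat (SB X Y B eB) u by move=> u; rewrite eVB => -[].
have hch : forall i, exists fab : ((A * X * Y)%type -> R) * ((B * X * Y)%type -> R),
    [/\ VA fab.1, VB fab.2 &
     v i = (fun c => fab.1 (c.1.1.1, c.1.2, c.2) * fab.2 (c.1.1.2, c.1.2, c.2))].
  by move=> i; have [fa [fb [h1 [h2 h3]]]] := hV i; exists (fa, fb).
have [fab hfab] := choice hch.
have [i0 _] : exists i0 : 'I_n, True.
  case: (EM (exists i0 : 'I_n, True)) => // hn; exfalso.
  move: hs; rewrite big1 => [/eqP|i _]; first by rewrite eq_sym oner_eq0.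
  by case: hn; exists i.
pose ix (l : nat) : 'I_n := odflt i0 (insub l).
have ixK : forall i : 'I_n, ix i = i by move=> i; rewrite /ix valK.
pose pA (l : nat) a x y := (fab (ix l)).1 (a, x, y).
pose pB (l : nat) b x y := (fab (ix l)).2 (b, x, y).
have sA : forall l, sat (SA X Y A eA) (uc3 (pA l)).
  by move=> l; rewrite /pA uc3K; have [h _ _] := hfab (ix l); exact: satVA.
have sB : forall l, sat (SB X Y B eB) (uc3 (pB l)).
  by move=> l; rewrite /pB uc3K; have [_ h _] := hfab (ix l); exact: satVB.
exists (fun a b x y => z (a, b, x, y)); last by apply/funext => -[[[a b] x] y].
exists default_measure_display, nat, (wmu hw hs : probability nat R), pA, pB.
split; [|split].
- split; first by move=> a x y; exact: meas_natR.
  split=> l.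
  + by have [h _] := (localA_sat eA (pA l)).2 (sA l); exact: h.
  + by have [_ h] := (localA_sat eA (pA l)).2 (sA l); exact: h.
- split; first by move=> b x y; exact: meas_natR.
  split=> l.
  + by move=> x y; have [h _] := (localB_sat eB (pB l)).2 (sB l); exact: h.
  + by have [_ h] := (localB_sat eB (pB l)).2 (sB l); exact: h.
- move=> a b x y; rewrite wmu_int; last first.
    move=> l; apply: mulr_ge0.
      by have /SS_spec[h _ _] := sA l; have /andP[] := h (a, x, y).
    by have /SS_spec[h _ _] := sB l; have /andP[] := h (b, x, y).
  congr EFin; rewrite hz; apply: eq_bigr => i _.
  by rewrite /pA /pB ixK; have [_ _ ->] := hfab i.
Qed.

End MainSec.

Unset Implicit Arguments.

Theorem mainTheorem3 (R : realType) (X Y A B : finType) (eA eB : R)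
  (heA : 0 <= eA <= 1) (heB : 0 <= eB <= 1) :
  let VA := vertices (uc3 @` @P2A R X Y A eA) in
  let VB := vertices (uc3 @` @P2B R X Y B eB) in
  let V : set (A * B * X * Y -> R) :=
    [set v | exists pA pB, VA pA /\ VB pB /\
       v = (fun c => pA (c.1.1.1, c.1.2, c.2) * pB (c.1.1.2, c.1.2, c.2))] in
  [/\ finite_set VA, finite_set VB,
      uc4 @` @P2AB R X Y A B eA eB = conv_hull V
    & vertices (uc4 @` @P2AB R X Y A B eA eB) `<=` V].
Proof.
move=> VA VB V.
have eVA : VA = vertices (sat (SA X Y A eA)) by rewrite /VA P2A_eq.
have eVB : VB = vertices (sat (SB X Y B eB)) by rewrite /VB P2B_eq.
have hconv : uc4 @` @P2AB R X Y A B eA eB = conv_hull V.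
  apply/seteqP; split.
  - exact: (P2AB_sub eVA eVB).
  - exact: (hull_sub eVA eVB).
split.
- by rewrite eVA; exact: finite_vertices.
- by rewrite eVB; exact: finite_vertices.
- exact: hconv.
- by rewrite hconv; exact: vert_conv.
Qed.
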